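(* Let $G$ be a graph of order $n$ having $q\ge 1$ vertices $v_1,\dots,v_q$, each of degree larger than two, such that the distance between any two of them is at least three, and such that the set of vertices not adjacent to (nor equal to) any $v_i$, $i\in\{1,\dots,q\}$, i.e. $V(G)\setminus\bigcup_{i=1}^q N_G[v_i]$, is an independent set. Then $$\gamma_{qtR}(G)\le n+3q-\sum_{i=1}^q (d_G(v_i)+1).$$
   Context: All graphs are finite, simple and undirected; $N_G[v]$ is the closed neighborhood and $d_G(v)$ the degree. For $f:V(G)\to\{0,1,2\}$ write $V_i=\{v:f(v)=i\}$; weight $\omega(f)=|V_1|+2|V_2|$. A quasi-total Roman dominating function (QTRDF) is an $f$ such that every vertex labeled $0$ is adjacent to a vertex labeled $2$, and every vertex isolated in the subgraph induced by $V_1\cup V_2$ has label $1$; $\gamma_{qtR}(G)$ is the minimum weight of a QTRDF. *)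

(* Defs.v *)
(* finite simple graphs as symmetric irreflexive relations on a finType. *)
From mathcomp Require Import all_boot.
Set Implicit Arguments. Unset Strict Implicit. Unset Printing Implicit Defensive.

Section Graph.
Variables (T : finType) (e : rel T).

Definition nbh (v : T) : {set T} := [set u | e v u].
Definition cnbh (v : T) : {set T} := v |: nbh v.
Definition deg (v : T) : nat := #|nbh v|.

Definition dist_ge3 (u v : T) : bool :=
  [&& u != v, ~~ e u v & [forall w, ~~ (e u w && e w v)]].

Definition independent (A : {set T}) : bool :=
  [forall x in A, forall y in A, ~~ e x y].

Definition weight (f : {ffun T -> 'I_3}) : nat := \sum_(v : T) (f v : nat).

Definition is_qtrdf (f : {ffun T -> 'I_3}) : bool :=
  [forall v, ((f v : nat) == 0) ==> [exists u, e v u && ((f u : nat) == 2)]] &&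
  (* v in V1 u V2 isolated in the subgraph induced by V1 u V2 must have label 1 *)
  [forall v, (((f v : nat) != 0) && [forall u, e v u ==> ((f u : nat) == 0)])
               ==> ((f v : nat) == 1)].

(* minimum weight of a QTRDF; 2|V| is an upper bound since the constant-1
   labelling is a QTRDF of weight |V| *)
Definition gamma_qtR : nat :=
  \big[minn/(#|T|).*2]_(f : {ffun T -> 'I_3} | is_qtrdf f) weight f.

End Graph.

(* Main.v *)
Require Import Defs.
From mathcomp Require Import all_boot.
From mathcomp Require Import zify.

Lemma card_sum_ind (T : finType) (A : {set T}) : \sum_(x : T) (x \in A : nat) = #|A|.
Proof.
by rewrite -sum1_card [RHS]big_mkcond; apply: eq_bigr => x _; case: (x \in A).
Qed.

Lemma bigmin_le (I : finType) (P : pred I) (F : I -> nat) d i :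
  P i -> \big[minn/d]_(j | P j) F j <= F i.
Proof.
move=> Pi; have : i \in index_enum I by rewrite mem_index_enum.
elim: (index_enum I) => //= j r IH; rewrite in_cons big_cons.
case/orP => [/eqP <-|ir]; first by rewrite Pi geq_minl.
case: (P j); last exact: IH.
exact: leq_trans (geq_minr _ _) (IH ir).
Qed.

Theorem mainTheorem5 (T : finType) (e : rel T)
  (e_sym : symmetric e) (e_irr : irreflexive e) (S : {set T}) :
  0 < #|S| ->
  (forall v, v \in S -> 2 < deg e v) ->
  (forall u v, u \in S -> v \in S -> u != v -> dist_ge3 e u v) ->
  independent e [set x | [forall v in S, x \notin cnbh e v]] ->
  gamma_qtR e + \sum_(v in S) (deg e v).+1 <= #|T| + 3 * #|S|.
Proof.
move=> _ Hdeg Hdist _.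
pose pk v := odflt v [pick u in nbh e v].
have pkP : forall v, v \in S -> e v (pk v).
  move=> v vS; rewrite /pk; case: pickP => [u|] /=; first by rewrite inE.
  move=> H; have := Hdeg v vS; rewrite /deg.
  by have -> : #|nbh e v| = 0 by apply: eq_card0 => u; rewrite H.
pose U := [set pk v | v in S].
pose C := [set x | [exists v in S, x \in cnbh e v]].
have uniq : forall x u v, u \in S -> v \in S -> x \in cnbh e u -> x \in cnbh e v -> u = v.
  move=> x u v uS vS; rewrite !inE => Hu Hv.
  apply/eqP; apply/negPn/negP => neq.
  have /and3P [_ nuv /forallP Hw] := Hdist u v uS vS neq.
  case/orP: Hu => [/eqP xu|eux]; case/orP: Hv => [/eqP xv|evx].
  - by move: neq; rewrite -xu -xv eqxx.
  - by move: nuv; rewrite -xu e_sym evx.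
  - by move: nuv; rewrite -xv eux.
  - by have := Hw x; rewrite eux /= e_sym evx.
have cnt : forall x, \sum_(v in S) (x \in cnbh e v : nat) <= (x \in C).
  move=> x; case: (boolP (x \in C)) => xC.
    move: (xC); rewrite inE => /existsP [v0 /andP [v0S xv0]].
    rewrite (bigD1 v0) //= xv0 big1 // => v /andP [vS nv].
    case: (boolP (x \in cnbh e v)) => // xv.
    by move: nv; rewrite (uniq x v v0 vS v0S xv xv0) eqxx.
  rewrite big1 // => v vS; case: (boolP (x \in cnbh e v)) => // xv.
  by move: xC; rewrite inE; case/existsP; exists v; rewrite vS xv.
pose g x := if x \in S then 2 else if x \in U then 1 else if x \in C then 0 else 1.
have g3 : forall x, g x < 3 by move=> x; rewrite /g; case: (x \in S); case: (x \in U); case: (x \in C).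
pose f : {ffun T -> 'I_3} := [ffun x => inord (g x)].
have fE : forall x, (f x : nat) = g x by move=> x; rewrite ffunE inordK.
have Hq : is_qtrdf e f.
  apply/andP; split; apply/forallP => x; rewrite fE /g.
    case: ifP => // xS; case: ifP => // xU; case: ifP => // xC; apply/implyP => _.
    move: xC; rewrite inE => /existsP [v /andP [vS]]; rewrite !inE.
    case/orP => [/eqP xv|evx]; first by rewrite xv vS in xS.
    by apply/existsP; exists v; rewrite e_sym evx fE /g vS.
  case: ifP => xS; last by move: (x \in U) (x \in C) => [] [] /=; rewrite ?implybT.
  apply/implyP => /andP [_ /forallP H].
  have := H (pk x); rewrite pkP //= fE /g.
  have -> : (pk x \in S) = false.
    apply/negP => pS.
    have nx : x != pk x by apply/eqP => ex; have := pkP x xS; rewrite -ex e_irr.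
    by have /and3P [_ /negP nxp _] := Hdist x (pk x) xS pS nx; apply: nxp; exact: pkP.
  by rewrite imset_f.
have Hg : gamma_qtR e <= weight f.
  by rewrite /gamma_qtR; apply: (@bigmin_le _ (fun g => is_qtrdf e g) (fun g => weight g) _ f Hq).
have Hsum : \sum_(v in S) (deg e v).+1 = \sum_x \sum_(v in S) (x \in cnbh e v : nat).
  rewrite exchange_big /=; apply: eq_bigr => v vS.
  by rewrite card_sum_ind /cnbh cardsU1 /deg inE e_irr.
have HU : #|U| <= #|S| by apply: leq_imset_card.
have Hpt : forall x, (f x : nat) + \sum_(v in S) (x \in cnbh e v : nat)
             <= (x \in S : nat) * 2 + (x \in U : nat) + 1.
  move=> x; apply: (leq_trans (leq_add (leqnn _) (cnt x))); rewrite fE /g.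
  case: ifP => xS; first by case: (x \in C); case: (x \in U).
  case: ifP => xU; first by case: (x \in C).
  by case: ifP.
apply: (leq_trans (leq_add Hg (leqnn _))).
rewrite Hsum /weight -big_split /=.
apply: (@leq_trans (\sum_x ((x \in S : nat) * 2 + (x \in U : nat) + 1))).
  by apply: leq_sum => x _; exact: Hpt.
rewrite !big_split /= -big_distrl /= !card_sum_ind sum1_card.
have -> : #|(xpredT : pred T)| = #|T| by apply: eq_card. lia.
Qed.
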